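(* Suppose that $X\subseteq\mathbb{R}$ is a Bernstein set. Then \textsc{Bob} has a winning strategy in the game $\mathsf{BM}_\mathrm{fin}(X)$.
   Context: A set $X\subseteq\mathbb{R}$ is a Bernstein set if both $X$ and $\mathbb{R}\setminus X$ meet every uncountable closed subset of $\mathbb{R}$. $X$ carries the subspace topology. The game $\mathsf{BM}_\mathrm{fin}(X)$ is played by \textsc{Alice} and \textsc{Bob} as follows. \textsc{Alice} plays a non-empty open set $A_0$; \textsc{Bob} plays a finite collection $\mathcal{B}_0$ of non-empty open subsets of $A_0$. In inning $n+1$, for each $B \in \mathcal{B}_n$ \textsc{Alice} plays a non-empty open set $A_B \subseteq B$; let $\mathcal{A}_{n+1}=\{A_B : B\in\mathcal{B}_n\}$; then \textsc{Bob} plays a finite collection $\mathcal{B}_{n+1}$ of non-empty open subsets of $\bigcup\mathcal{A}_{n+1}$. Put $B_n=\bigcup\mathcal{B}_n$. \textsc{Bob} wins the play if $\bigcap_{n\in\omega}B_n\neq\emptyset$; otherwise \textsc{Alice} wins. *)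

(* Defs.v *)
From HB Require Import structures.
From mathcomp Require Import all_boot all_order all_algebra.
From mathcomp Require Import all_classical all_reals all_analysis.
Set Implicit Arguments. Unset Strict Implicit. Unset Printing Implicit Defensive.
Import Order.TTheory GRing.Theory Num.Theory.
Import numFieldNormedType.Exports.
Local Open Scope classical_set_scope.

Section Defs.
Variable R : realType.

Definition bernstein (X : set R) : Prop :=
  forall C : set R, closed C -> ~ countable C ->
    (C `&` X !=set0) /\ (C `&` ~` X !=set0).

Definition sub_open (X V : set R) : Prop :=
  exists U : set R, open U /\ V = U `&` X.

Definition ne_sub_open (X V : set R) : Prop := sub_open X V /\ V !=set0.

(* A play is given by Alice's first move A0 and a sequence a : nat -> (set R -> set R),
   where a n is Alice's move in inning n+1: she answers B in B_n with a n B.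
   A strategy of Bob maps A0 and the history [a 0; ...; a (n-1)] to B_n. *)
Definition bob_strategy := set R -> seq (set R -> set R) -> set (set R).

Definition bob_move (sigma : bob_strategy) (A0 : set R)
  (a : nat -> set R -> set R) (n : nat) : set (set R) :=
  sigma A0 (mkseq a n).

Definition Union (F : set (set R)) : set R := \bigcup_(B in F) B.

Definition alice_legal (X : set R) (sigma : bob_strategy) (A0 : set R)
  (a : nat -> set R -> set R) (n : nat) : Prop :=
  forall B, bob_move sigma A0 a n B -> ne_sub_open X (a n B) /\ a n B `<=` B.

Definition bob_legal (X : set R) (sigma : bob_strategy) (A0 : set R)
  (a : nat -> set R -> set R) (n : nat) : Prop :=
  finite_set (bob_move sigma A0 a n) /\
  forall B, bob_move sigma A0 a n B ->
    ne_sub_open X B /\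
    B `<=` (match n with
            | 0 => A0
            | m.+1 => \bigcup_(C in bob_move sigma A0 a m) a m C
            end).

Definition bob_winning (X : set R) (sigma : bob_strategy) : Prop :=
  forall (A0 : set R) (a : nat -> set R -> set R),
    ne_sub_open X A0 ->
    (forall n, (forall k, (k < n)%N -> alice_legal X sigma A0 a k) ->
               bob_legal X sigma A0 a n) /\
    ((forall n, alice_legal X sigma A0 a n) ->
       \bigcap_(n : nat) Union (bob_move sigma A0 a n) !=set0).

Definition bob_has_winning_strategy (X : set R) : Prop :=
  exists sigma : bob_strategy, bob_winning X sigma.

End Defs.

(* Main.v *)
From HB Require Import structures.
From mathcomp Require Import all_boot all_order all_algebra.
From mathcomp Require Import all_classical all_reals all_analysis.
From mathcomp Require Import ring lra.
Require Import Defs.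
Set Implicit Arguments. Unset Strict Implicit. Unset Printing Implicit Defensive.
Import Order.TTheory GRing.Theory Num.Theory.
Import numFieldNormedType.Exports.
Local Open Scope classical_set_scope.
Local Open Scope ring_scope.

Lemma itv_uncountable (R : realType) (p q : R) : p < q -> ~ countable `[p, q].
Proof.
move=> pq /countable_lebesgue_measure0.
rewrite lebesgue_measure_itv /= lte_fin pq => /eqP.
by rewrite -EFinD eqe subr_eq0 gt_eqF.
Qed.

Section Main.
Variable R : realType.
Variable X : set R.

Definition I (c : R * R) : set R := `]c.1, c.2[ `&` X.

Definition cl (c : R * R) : set R := `[c.1, c.2].

Definition good (J A : set R) (xr : R * R) : Prop :=
  0 < xr.2 /\ `]xr.1 - xr.2, xr.1 + xr.2[ `<=` J /\
  `]xr.1 - xr.2, xr.1 + xr.2[ `&` X `<=` A.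

Definition kids (J A : set R) : seq (R * R) :=
  match pselect (exists xr, good J A xr) with
  | left h => let xr := projT1 (cid h) in
      [:: (xr.1 - xr.2 / 2, xr.1 - xr.2 / 4); (xr.1 + xr.2 / 4, xr.1 + xr.2 / 2)]
  | right _ => [::]
  end.

Lemma kids_spec J A c : c \in kids J A -> exists x r, good J A (x, r) /\
  (c = (x - r / 2, x - r / 4) \/ c = (x + r / 4, x + r / 2)).
Proof.
rewrite /kids; case: pselect => // h.
case: (cid h) => [[x r] g] /=.
rewrite !inE => /orP[/eqP->|/eqP->]; exists x, r; split => //; by [left|right].
Qed.

Lemma kid_props J A c : c \in kids J A ->
  c.1 < c.2 /\ cl c `<=` J /\ `]c.1, c.2[ `&` X `<=` A.
Proof.
move=> /kids_spec [x [r [[r0 [sJ sA]] hc]]].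
rewrite /= in r0 sJ sA.
have lt12 : c.1 < c.2 by case: hc => -> /=; lra.
have H : cl c `<=` `]x - r, x + r[.
  move=> z; rewrite /cl /= !in_itv /= => /andP[h1 h2].
  by case: hc h1 h2 => -> /= h1 h2; apply/andP; split; lra.
split; first by [].
split; first by move=> z /H /sJ.
move=> z [zc zX]; apply: sA; split => //; apply: H.
by move: zc => /=; rewrite !in_itv /= => /andP[h1 h2]; apply/andP; split; apply: ltW.
Qed.

Lemma kids_two J A : (exists xr, good J A xr) ->
  exists c1 c2, c1 \in kids J A /\ c2 \in kids J A /\
    forall z, cl c1 z -> ~ cl c2 z.
Proof.
rewrite /kids => h; case: pselect => // h'.
case: (cid h') => [[x r] [r0 _]] /=.
rewrite /= in r0.
exists (x - r / 2, x - r / 4), (x + r / 4, x + r / 2).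
rewrite !inE !eqxx /= orbT; split => //; split => // z.
rewrite /cl /= !in_itv /= => /andP[h1 h2] /andP[h3 h4]; lra.
Qed.


Lemma good_exists J A : open J -> ne_sub_open X A -> A `<=` J ->
  exists xr, good J A xr.
Proof.
move=> oJ [[U [oU ->]] [x [Ux Xx]]] AJ.
have : nbhs x (U `&` J).
  apply: open_nbhs_nbhs; split; first exact: openI.
  by split => //; apply: AJ.
move=> /nbhs_ballP [r /= r0 hr].
exists (x, r); split => //=; rewrite -ball_itv; split.
  by move=> z /hr [].
by move=> z [/hr [Uz _] Xz].
Qed.

Lemma itv_meets (p q : R) : bernstein X -> p < q -> I (p, q) !=set0.
Proof.
move=> bX pq.
have h : p + (q - p) / 3 < q - (q - p) / 3 by lra.
have [] := bX _ (@itv_closed _ R _ _) (itv_uncountable h).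
move=> [z [zc Xz]] _; exists z; split => //.
move: zc; rewrite /= !in_itv /= => /andP[h1 h2]; apply/andP; split; lra.
Qed.

Fixpoint nodes (A0 : set R) (g : nat -> set R -> set R) (n : nat) : seq (R * R) :=
  match n with
  | 0 => kids setT A0
  | m.+1 => flatten [seq kids `]c.1, c.2[ (g m (I c)) | c <- nodes A0 g m]
  end.

Lemma nodes_ext A0 g g' n : (forall k, (k < n)%N -> g k = g' k) ->
  nodes A0 g n = nodes A0 g' n.
Proof.
elim: n => // n IH h /=.
rewrite IH; last by move=> k kn; apply: h; exact: ltnW.
by rewrite h.
Qed.

Lemma nodesS A0 g n c : c \in nodes A0 g n.+1 ->
  exists2 c0, c0 \in nodes A0 g n & c \in kids `]c0.1, c0.2[ (g n (I c0)).
Proof. by move=> /flatten_mapP. Qed.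

Lemma nodes_lt A0 g n c : c \in nodes A0 g n -> c.1 < c.2.
Proof.
case: n => [|n]; first by move/kid_props => [].
by move/nodesS => [c0 _ /kid_props []].
Qed.

Definition sigma : bob_strategy R := fun A0 s =>
  I @` [set` nodes A0 (fun k => nth (fun B => B) s k) (size s)].

Lemma bob_moveE A0 a n : bob_move sigma A0 a n = I @` [set` nodes A0 a n].
Proof.
rewrite /bob_move /sigma size_mkseq.
by rewrite (@nodes_ext A0 _ a) // => k kn; rewrite nth_mkseq.
Qed.


Lemma legal A0 a n : bernstein X -> bob_legal X sigma A0 a n.
Proof.
move=> bX; split; first by rewrite bob_moveE; apply: finite_image; exact: finite_seq.
move=> B; rewrite bob_moveE => -[c cn <-]; split.
  split; first by exists `]c.1, c.2[%classic; split => //; exact: itv_open.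
  by case: c cn => p q cn; apply: itv_meets => //; exact: (nodes_lt cn).
case: n cn => [|m] cn.
  by move: cn => /kid_props [_ [_ h]].
move: cn => /nodesS [c0 c0n /kid_props [_ [_ h]]] z Iz.
rewrite bob_moveE; exists (I c0); first by exists c0.
exact: h.
Qed.


Lemma win A0 a : bernstein X -> ne_sub_open X A0 ->
  (forall n, alice_legal X sigma A0 a n) ->
  \bigcap_(n : nat) Union (bob_move sigma A0 a n) !=set0.
Proof.
move=> bX hA0 hal.
have goodn : forall n c, c \in nodes A0 a n ->
    exists xr, good `]c.1, c.2[ (a n (I c)) xr.
  move=> n c cn.
  have hc : bob_move sigma A0 a n (I c) by rewrite bob_moveE; exists c.
  have [h1 h2] := hal n (I c) hc.
  apply: good_exists; [exact: itv_open | exact: h1 | by move=> z /h2 []].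
have good0 : exists xr, good setT A0 xr.
  by apply: good_exists => //; exact: openT.
pose K := \bigcap_(n in [set: nat]) \bigcup_(c in [set` nodes A0 a n]) cl c.
have cK : closed K.
  apply: closed_bigI => n _; rewrite bigcup_seq; apply: closed_bigsetU => c _.
  exact: itv_closed.
have ucK : ~ countable K.
  move=> /countable_injP [f finj].
  pose avoid m c := forall z, K z -> f z = m -> ~ cl c z.
  have avoid_ex : forall J A m, (exists xr, good J A xr) ->
      exists c, c \in kids J A /\ avoid m c.
    move=> J A m /kids_two [c1 [c2 [k1 [k2 disj]]]].
    have [h|h] := pselect (avoid m c1); first by exists c1.
    exists c2; split => // z Kz fz c2z; apply: h => z' Kz' fz' c1z'.
    have ez : z' = z by apply: finj; rewrite ?inE //; congruence.
    by subst; exact: disj c1z' c2z.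
  pose sel (s : seq (R * R)) m := head (0, 0) [seq c <- s | `[< avoid m c >]].
  have selP : forall s m, (exists c, c \in s /\ avoid m c) ->
      sel s m \in s /\ avoid m (sel s m).
    move=> s m [c [cs ac]].
    have : has (fun c => `[< avoid m c >]) s.
      by apply/hasP; exists c => //; apply/asboolP.
    rewrite has_filter /sel; case E: [seq _ <- _ | _] => [//|y t] _ /=.
    have : y \in [seq c <- s | `[< avoid m c >]] by rewrite E mem_head.
    by rewrite mem_filter => /andP[/asboolP ? ?].
  pose fix b n := match n with
    | 0 => sel (nodes A0 a 0) 0
    | m.+1 => sel (kids `](b m).1, (b m).2[ (a m (I (b m)))) m.+1 end.
  have bP : forall n, b n \in nodes A0 a n /\ avoid n (b n).
    elim => [|n [bn _]]; first exact: selP (avoid_ex _ _ 0 good0).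
    have [h1 h2] := selP _ n.+1 (avoid_ex _ _ n.+1 (goodn n _ bn)).
    split => //; apply/flatten_mapP; exists (b n) => //.
  have bnest : forall n, (b n).1 < (b n.+1).1 /\ (b n.+1).2 < (b n).2.
    move=> n.
    have h1 : b n.+1 \in kids `](b n).1, (b n).2[ (a n (I (b n))) :=
      (selP _ n.+1 (avoid_ex _ _ n.+1 (goodn n _ (bP n).1))).1.
    have [lt [sub _]] := kid_props h1.
    have c1 : cl (b n.+1) (b n.+1).1 by rewrite /cl /= in_itv /= lexx ltW.
    have c2 : cl (b n.+1) (b n.+1).2 by rewrite /cl /= in_itv /= lexx ltW.
    have s1 := sub _ c1; have s2 := sub _ c2.
    move: s1 s2; rewrite /= !in_itv /= => /andP[? ?] /andP[? ?]; split => //.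
  have mono : forall n k, (b n).1 <= (b (k + n)%N).1 /\ (b (k + n)%N).2 <= (b n).2.
    move=> n; elim => [|k [IH1 IH2]]; first by split.
    have [h1 h2] := bnest (k + n); split.
      exact: le_trans IH1 (ltW h1).
    exact: le_trans (ltW h2) IH2.
  have ub : forall n m, (b n).1 <= (b m).2.
    move=> n m; have [h1 _] := mono n m; have [_ h2] := mono m n.
    have h3 := nodes_lt (bP (m + n)%N).1.
    rewrite addnC in h2; apply: le_trans h1 _; apply: le_trans (ltW h3) h2.
  pose E := [set (b n).1 | n in [set: nat]].
  have E0 : E !=set0 by exists (b 0).1; exists 0.
  have hsE : has_sup E by split => //; exists (b 0).2 => _ [n _ <-]; exact: ub.
  have wcl : forall n, cl (b n) (sup E).
    move=> n; rewrite /cl /= in_itv /=; apply/andP; split.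
      by apply: sup_upper_bound => //; exists n.
    by apply: ge_sup => // _ [m _ <-]; exact: ub.
  have Kw : K (sup E) by move=> n _; exists (b n) => //; exact: (bP n).1.
  exact: (bP (f (sup E))).2 _ Kw erefl (wcl _).
have [[z [Kz Xz]] _] := bX K cK ucK.
exists z => n _.
have [c cn zc] := Kz n.+1 Logic.I.
move: cn => /nodesS [c0 c0n /kid_props [_ [sub _]]].
exists (I c0); first by rewrite bob_moveE; exists c0.
by split => //; apply: sub.
Qed.

End Main.

Theorem proposition2p5 (R : realType) (X : set R) :
  bernstein X -> bob_has_winning_strategy X.
Proof.
move=> bX; exists (sigma X) => A0 a hA0; split.
  by move=> n _; exact: legal.
exact: win.
Qed.
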